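(* The assignment $A\mapsto F^2$, $B\mapsto F^{12}\,[F(F'')^{-1}]^2=\mathrm{diag}(1,-e^{i\pi/3},e^{2i\pi/3})$, $H_1\mapsto \tilde B E$, $H_3\mapsto E$ extends to a group isomorphism $Fr(162)=\mathcal N\rtimes\langle H_1,H_3\rangle\to D(9,1,1;2,1,1)=\langle F^2,[F(F'')^{-1}]^2\rangle\rtimes\langle \tilde B,E\rangle$. In particular $Fr(162)\cong D(9,1,1;2,1,1)$.
   Context: Let $\omega=e^{2i\pi/3}$. Define $G_1=\mathrm{diag}(e^{7i\pi/9},-e^{4i\pi/9},-e^{7i\pi/9})$, $G_2=\begin{pmatrix}-\tfrac12 e^{4i\pi/9}&\tfrac{1}{\sqrt2}e^{7i\pi/9}&\tfrac12 e^{4i\pi/9}\\ \tfrac{1}{\sqrt2}e^{7i\pi/9}&0&\tfrac{1}{\sqrt2}e^{7i\pi/9}\\ \tfrac12 e^{4i\pi/9}&\tfrac{1}{\sqrt2}e^{7i\pi/9}&-\tfrac12 e^{4i\pi/9}\end{pmatrix}$ and $Fr(162)=\langle G_1,G_2\rangle\subset SU(3)$. Let $A=G_1G_2^2G_1^{-1}=\tfrac12 e^{5i\pi/9}\begin{pmatrix}-1+e^{i\pi/3}&0&1+e^{i\pi/3}\\0&-2&0\\1+e^{i\pi/3}&0&-1+e^{i\pi/3}\end{pmatrix}$, $B=G_1G_2^{-2}G_1=\tfrac12\begin{pmatrix}1+\omega&0&-1+\omega\\0&-2e^{i\pi/3}&0\\-1+\omega&0&1+\omega\end{pmatrix}$,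 $\mathcal N=\langle A,B\rangle$, $H_1=\begin{pmatrix}-\frac12&-\frac1{\sqrt2}&-\frac12\\-\frac1{\sqrt2}&0&\frac1{\sqrt2}\\-\frac12&\frac1{\sqrt2}&-\frac12\end{pmatrix}$, $H_3=\begin{pmatrix}\frac12&\frac1{\sqrt2}&-\frac12\\\frac1{\sqrt2}&0&\frac1{\sqrt2}\\\frac12&-\frac1{\sqrt2}&-\frac12\end{pmatrix}$ (both in $Fr(162)$). Let $F=\mathrm{diag}(e^{i\pi/9},e^{i\pi/9},e^{-2i\pi/9})$, $F''=\mathrm{diag}(e^{-2i\pi/9},e^{i\pi/9},e^{i\pi/9})$, $E=\begin{pmatrix}0&1&0\\0&0&1\\1&0&0\end{pmatrix}$, $\tilde B=\begin{pmatrix}-1&0&0\\0&0&-1\\0&-1&0\end{pmatrix}$, and $D(9,1,1;2,1,1)=\langle F^2,E,\tilde B\rangle\subset SU(3)$. *)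

(* Defs.v *)
From HB Require Import structures.
From mathcomp Require Import all_boot all_order all_algebra all_field.
Set Implicit Arguments. Unset Strict Implicit. Unset Printing Implicit Defensive.
Import Order.TTheory GRing.Theory Num.Theory.
Local Open Scope ring_scope.

Notation M3 := 'M[algC]_3.

Definition mx3 (a b c d e f g h k : algC) : M3 :=
  \matrix_(i < 3, j < 3)
    nth 0 (nth [::] [:: [:: a; b; c]; [:: d; e; f]; [:: g; h; k]] i) j.

Definition diag3 (a b c : algC) : M3 := mx3 a 0 0 0 b 0 0 0 c.

(* z = e^{i pi/9}: the 9th root of -1 with minimal nonnegative argument *)
Definition z : algC := 9.-root (-1).
Definition s2 : algC := sqrtC 2.

Inductive gen (gs : seq M3) : M3 -> Prop :=
| gen_one : gen gs 1%:M
| gen_in x : x \in gs -> gen gs x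
| gen_mul x y : gen gs x -> gen gs y -> gen gs (x *m y)
| gen_inv x : gen gs x -> gen gs (invmx x).

Definition G1 : M3 := diag3 (z ^+ 7) (- z ^+ 4) (- z ^+ 7).
Definition G2 : M3 :=
  mx3 (- z ^+ 4 / 2) (z ^+ 7 / s2) (z ^+ 4 / 2)
      (z ^+ 7 / s2)  0            (z ^+ 7 / s2)
      (z ^+ 4 / 2)   (z ^+ 7 / s2) (- z ^+ 4 / 2).

Definition Fr162 := gen [:: G1; G2].

Definition A : M3 := G1 *m (G2 *m G2) *m invmx G1.
Definition B : M3 := G1 *m invmx (G2 *m G2) *m G1.
Definition NN := gen [:: A; B].

Definition H1 : M3 :=
  mx3 (- 1/2) (- 1/s2) (- 1/2)
      (- 1/s2) 0 (1/s2)
      (- 1/2) (1/s2) (- 1/2).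
Definition H3 : M3 :=
  mx3 (1/2) (1/s2) (- 1/2)
      (1/s2) 0 (1/s2)
      (1/2) (- 1/s2) (- 1/2).
Definition KH := gen [:: H1; H3].

Definition F : M3 := diag3 z z (z ^+ 2)^-1.
Definition F'' : M3 := diag3 (z ^+ 2)^-1 z z.
Definition E : M3 := mx3 0 1 0 0 0 1 1 0 0.
Definition Bt : M3 := mx3 (-1) 0 0 0 0 (-1) 0 (-1) 0.

Definition C2 : M3 := (F *m invmx F'') *m (F *m invmx F'').

Definition D9 := gen [:: F *m F; E; Bt].
Definition ND := gen [:: F *m F; C2].
Definition KD := gen [:: Bt; E].

Definition semidirect (G N K : M3 -> Prop) : Prop :=
  [/\ (forall x, N x -> G x), (forall x, K x -> G x),
      (forall g n, G g -> N n -> N (invmx g *m n *m g)),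
      (forall x, N x -> K x -> x = 1%:M)
    & (forall g, G g -> exists n k, [/\ N n, K k & g = n *m k])].

Definition group_iso (G H : M3 -> Prop) (f : M3 -> M3) : Prop :=
  [/\ (forall x, G x -> H (f x)),
      (forall x y, G x -> G y -> f (x *m y) = f x *m f y),
      (forall x y, G x -> G y -> f x = f y -> x = y)
    & (forall y, H y -> exists2 x, G x & f x = y)].

(* Main.v *)
Require Import Defs.
From HB Require Import structures.
From mathcomp Require Import all_boot all_order all_algebra all_field.
Import Order.TTheory GRing.Theory Num.Theory.
From mathcomp Require Import ring.
Local Open Scope ring_scope.
Set Implicit Arguments. Unset Strict Implicit.

Lemma inv_eq (A B : M3) : A *m B = 1%:M -> invmx A = B.
Proof.
move=> h; have [uA _] := mulmx1_unit h.
by rewrite -[invmx A]mulmx1 -h mulmxA mulVmx // mul1mx.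
Qed.

Lemma gen_hom (h : M3 -> M3) gs hs :
  h 1%:M = 1%:M -> (forall x y, h (x *m y) = h x *m h y) ->
  (forall x, h (invmx x) = invmx (h x)) ->
  (forall g, g \in gs -> gen hs (h g)) -> forall x, gen gs x -> gen hs (h x).
Proof.
move=> h1 hM hV hg x; elim=> {x} [|x /hg //|x y _ ihx _ ihy|x _ ihx].
- rewrite h1; exact: gen_one.
- rewrite hM; exact: gen_mul.
- rewrite hV; exact: gen_inv.
Qed.

Lemma gen_sub gs hs : (forall g, g \in gs -> gen hs g) ->
  forall x, gen gs x -> gen hs x.
Proof. by move=> hg; apply: (@gen_hom id). Qed.

Lemma gen_unit gs : (forall g, g \in gs -> g \in unitmx) ->
  forall x, gen gs x -> x \in unitmx.
Proof.
move=> hg x; elim=> {x} [|x /hg //|x y _ ? _ ?|x _ ?].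
- exact: unitmx1.
- by rewrite unitmx_mul; apply/andP.
- by rewrite unitmx_inv.
Qed.

Lemma gen_pow gs x n : gen gs x -> gen gs (x ^+ n).
Proof.
move=> hx; elim: n => [|n ih]; first by rewrite expr0; exact: gen_one.
by rewrite exprS -mulmxE; apply: gen_mul.
Qed.

Lemma invmxM3 (A B : M3) : A \in unitmx -> B \in unitmx ->
  invmx (A *m B) = invmx B *m invmx A.
Proof.
move=> uA uB; apply: inv_eq.
by rewrite -mulmxA (mulmxA B) mulmxV // mul1mx mulmxV.
Qed.

Definition cj (P x : M3) := invmx P *m x *m P.

Section Conj.
Variable P : M3.
Hypothesis uP : P \in unitmx.

Lemma cj1 : cj P 1%:M = 1%:M.
Proof. by rewrite /cj mulmx1 mulVmx. Qed.

Lemma cjM x y : cj P (x *m y) = cj P x *m cj P y.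
Proof.
by rewrite /cj !mulmxA -[invmx P *m x *m P *m invmx P]mulmxA mulmxV // mulmx1.
Qed.

Lemma cjV x : cj P (invmx x) = invmx (cj P x).
Proof.
have [ux|nux] := boolP (x \in unitmx).
  by apply/esym/inv_eq; rewrite -cjM mulmxV // cj1.
have nc : cj P x \notin unitmx.
  by rewrite /cj !unitmx_mul negb_and; apply/orP; left; rewrite negb_and nux orbT.
by rewrite !invmx_out.
Qed.

Lemma cjK x : cj (invmx P) (cj P x) = x.
Proof.
by rewrite /cj invmxK !mulmxA mulmxV // mul1mx -mulmxA mulmxV // mulmx1.
Qed.

Lemma cjKV x : cj P (cj (invmx P) x) = x.
Proof.
by rewrite /cj invmxK !mulmxA mulVmx // mul1mx -mulmxA mulVmx // mulmx1.
Qed.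

Lemma cj_inj x y : cj P x = cj P y -> x = y.
Proof. by move=> h; rewrite -(cjK x) h cjK. Qed.
End Conj.

Inductive mon (gs : seq M3) : M3 -> Prop :=
| mon_one : mon gs 1%:M
| mon_in x : x \in gs -> mon gs x
| mon_mul x y : mon gs x -> mon gs y -> mon gs (x *m y).

Lemma mon_pow gs x n : mon gs x -> mon gs (x ^+ n).
Proof.
move=> hx; elim: n => [|n ih]; first by rewrite expr0; exact: mon_one.
by rewrite exprS -mulmxE; apply: mon_mul.
Qed.

Lemma gen_mon gs : (forall g, g \in gs -> g \in unitmx /\ mon gs (invmx g)) ->
  forall x, gen gs x -> mon gs x.
Proof.
move=> hg.
have key : forall x, mon gs x -> x \in unitmx /\ mon gs (invmx x).
  move=> x; elim=> {x} [|x /hg //|x y _ [ux ihx] _ [uy ihy]].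
  - by rewrite invmx1; split; [exact: unitmx1|exact: mon_one].
  - by rewrite unitmx_mul ux uy invmxM3 //; split=> //; apply: mon_mul.
move=> x; elim=> {x} [|x hx|x y _ ? _ ?|x _ /key [] //].
- exact: mon_one.
- exact: mon_in.
- exact: mon_mul.
Qed.

Lemma mon_ind' gs (Q : M3 -> Prop) : Q 1%:M -> (forall g, g \in gs -> Q g) ->
  (forall x y, Q x -> Q y -> Q (x *m y)) -> forall x, mon gs x -> Q x.
Proof. by move=> h1 hg hM x; elim=> // x' y' _ ? _ ?; apply: hM. Qed.

Lemma semidirect_gen gs ns ks :
  (forall g, g \in gs -> g \in unitmx) ->
  (forall n, n \in ns -> gen gs n) -> (forall k, k \in ks -> gen gs k) ->
  (forall g n, g \in gs -> n \in ns ->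
     gen ns (invmx g *m n *m g) /\ gen ns (g *m n *m invmx g)) ->
  (forall g, g \in gs -> exists n k, [/\ gen ns n, gen ks k & g = n *m k]) ->
  (forall x, gen ns x -> gen ks x -> x = 1%:M) ->
  semidirect (gen gs) (gen ns) (gen ks).
Proof.
move=> hu hN hK hc hd hi.
have NG : forall x, gen ns x -> gen gs x by apply: gen_sub.
have KG : forall x, gen ks x -> gen gs x by apply: gen_sub.
have Gu := gen_unit hu.
have norm : forall g, gen gs g -> forall n, gen ns n ->
    gen ns (invmx g *m n *m g) /\ gen ns (g *m n *m invmx g).
  move=> g; elim=> {g} [|g hg|x y gx ihx gy ihy|x hx ihx] n hn.
  - by rewrite invmx1 mul1mx !mulmx1.
  - have ug := hu _ hg.
    split.
      have := @gen_hom (cj g) ns ns (cj1 ug) (cjM ug) (cjV ug).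
      by apply=> // n' hn'; have [] := hc _ _ hg hn'.
    have ug' : invmx g \in unitmx by rewrite unitmx_inv.
    have := @gen_hom (cj (invmx g)) ns ns (cj1 ug') (cjM ug') (cjV ug').
    rewrite /cj invmxK; apply=> // n' hn'.
    have [_] := hc _ _ hg hn'. by [].
  - have ux : x \in unitmx by apply: Gu; assumption.
    have uy : y \in unitmx by apply: Gu; assumption.
    rewrite invmxM3 //; split.
      have [h1 _] := ihx _ hn; have [h2 _] := ihy _ h1.
      by move: h2; rewrite !mulmxA.
    have [_ h1] := ihy _ hn; have [_ h2] := ihx _ h1.
    by move: h2; rewrite !mulmxA.
  - have ux : x \in unitmx by apply: Gu.
    by rewrite invmxK; have [? ?] := ihx _ hn; split.
split=> //.
- by move=> g n hg hn; have [] := norm _ hg _ hn.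
move=> g; elim=> {g} [|g hg|x y _ [n1 [k1 [h1 h2 ->]]] _ [n2 [k2 [h3 h4 ->]]]|x _ [n [k [h1 h2 ->]]]].
- by exists 1%:M, 1%:M; rewrite mulmx1; split=> //; exact: gen_one.
- exact: hd.
- have uk1 : k1 \in unitmx by apply: Gu; apply: KG.
  exists (n1 *m (k1 *m n2 *m invmx k1)), (k1 *m k2); split.
  + apply: gen_mul => //; have [_ hh] := norm _ (KG _ h2) _ h3; exact: hh.
  + exact: gen_mul.
  + by rewrite !mulmxA -[_ *m invmx k1 *m k1]mulmxA mulVmx // mulmx1.
- have uk : k \in unitmx by apply: Gu; apply: KG.
  have un : n \in unitmx by apply: Gu; apply: NG.
  exists (invmx k *m invmx n *m k), (invmx k); split.
  + have [hh _] := norm _ (KG _ h2) _ (gen_inv h1); exact: hh.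
  + exact: gen_inv.
  + by rewrite invmxM3 // -!mulmxA mulmxV // mulmx1.
Qed.

Lemma semidirect_ext (G N K G' N' K' : M3 -> Prop) :
  (forall x, G x <-> G' x) -> (forall x, N x <-> N' x) -> (forall x, K x <-> K' x) ->
  semidirect G N K -> semidirect G' N' K'.
Proof.
move=> eG eN eK [h1 h2 h3 h4 h5]; split.
- by move=> x /eN /h1 /eG.
- by move=> x /eK /h2 /eG.
- by move=> g n /eG hg /eN hn; apply/eN; apply: h3.
- by move=> x /eN hn /eK hk; apply: h4.
- move=> g /eG /h5 [n [k [hn hk ->]]]; exists n, k; split=> //; [exact/eN|exact/eK].
Qed.

Lemma semidirect_cj P (G N K G' N' K' : M3 -> Prop) : P \in unitmx ->
  (forall x, G x <-> G' (cj P x)) -> (forall x, N x <-> N' (cj P x)) ->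
  (forall x, K x <-> K' (cj P x)) ->
  semidirect G' N' K' -> semidirect G N K.
Proof.
move=> uP eG eN eK [h1 h2 h3 h4 h5]; split.
- by move=> x /eN /h1 /eG.
- by move=> x /eK /h2 /eG.
- move=> g n /eG hg /eN hn; apply/eN.
  by rewrite !cjM // cjV //; apply: h3.
- move=> x /eN hn /eK hk; apply: (cj_inj uP); rewrite cj1 //; exact: h4.
- move=> g /eG /h5 [n [k [hn hk e]]].
  have uP' : invmx P \in unitmx by rewrite unitmx_inv.
  exists (cj (invmx P) n), (cj (invmx P) k); split.
  + by apply/eN; rewrite cjKV.
  + by apply/eK; rewrite cjKV.
  + by apply: (cj_inj uP); rewrite cjM // !cjKV.
Qed.
Lemma z9 : z ^+ 9 = -1.
Proof. by rewrite /z rootCK. Qed.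

Lemma z18 : z ^+ 18 = 1.
Proof. by rewrite (exprM z 9 2) z9 expr2 mulrNN mulr1. Qed.

Lemma zmod a : z ^+ a = z ^+ (a %% 18)%N.
Proof. by rewrite {1}(divn_eq a 18) exprD mulnC exprM z18 expr1n mul1r. Qed.

Lemma zeq a b : (a %% 18 = b %% 18)%N -> z ^+ a = z ^+ b.
Proof. by move=> h; rewrite zmod h -zmod. Qed.

Lemma z_neq0 a : z ^+ a != 0.
Proof.
apply/eqP=> h; have : z ^+ (a * 18) = 0 by rewrite exprM h expr0n.
by rewrite mulnC exprM z18 expr1n => /eqP; rewrite oner_eq0.
Qed.

Definition msz (p e : nat -> nat) : M3 :=
  \matrix_(i < 3, j < 3) if p i == j then z ^+ e i else 0.

Definition L (s : seq nat) := fun i => nth 0%N s i.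

Definition ok3 (p : nat -> nat) := all (fun i => p i < 3)%N (iota 0 3).

Lemma ok3P p : ok3 p -> forall i : 'I_3, (p i < 3)%N.
Proof. by move=> /allP h i; apply: h; rewrite mem_iota /=. Qed.

Lemma msz_mul p1 e1 p2 e2 : ok3 p1 ->
  msz p1 e1 *m msz p2 e2 = msz (fun i => p2 (p1 i)) (fun i => e1 i + e2 (p1 i)).
Proof.
move=> /ok3P h; apply/matrixP=> i j; rewrite !mxE.
rewrite (bigD1 (Ordinal (h i))) //= big1 ?addr0.
  rewrite !mxE eqxx; case: eqP => _; last by rewrite mulr0.
  by rewrite exprD.
move=> k /negbTE hk; rewrite !mxE.
suff -> : (p1 i == k) = false by rewrite mul0r.
apply/negbTE; apply: contraFN hk => /eqP e.
by apply/eqP/val_inj; rewrite /= e.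
Qed.

Definition chk (p e p' e' : nat -> nat) :=
  all (fun i => (p i == p' i) && (e i %% 18 == e' i %% 18))%N (iota 0 3).

Lemma msz_eq p e p' e' : chk p e p' e' -> msz p e = msz p' e'.
Proof.
move=> hc; apply/matrixP=> i j; rewrite !mxE.
have : ((p i == p' i) && (e i %% 18 == e' i %% 18))%N.
  by move/allP: hc; apply; rewrite mem_iota /=.
case/andP=> /eqP -> /eqP h; by rewrite (zeq h).
Qed.

Lemma msz1 : msz (fun i => i) (fun _ => 0%N) = 1%:M.
Proof. apply/matrixP=> i j. rewrite !mxE expr0 val_eqE; by case: (i == j). Qed.

Lemma msz_scale a p e : z ^+ a *: msz p e = msz p (fun i => a + e i)%N.
Proof.
apply/matrixP=> i j; rewrite !mxE; case: eqP => _; last by rewrite mulr0.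
by rewrite exprD.
Qed.

Definition psi (y : M3) := (\sum_(j < 3) y ord0 j) ^+ 12.

Lemma psi_msz p e : (p 0 < 3)%N -> psi (msz p e) = z ^+ (12 * e 0%N).
Proof.
move=> h; rewrite /psi (bigD1 (Ordinal h)) //= big1 ?addr0.
  by rewrite mxE eqxx -exprM mulnC.
move=> k /negbTE hk; rewrite mxE.
suff -> : (p 0%N == k) = false by [].
apply/negbTE; apply: contraFN hk => /eqP e'.
by apply/eqP/val_inj; rewrite /= e'.
Qed.

Lemma psi_scale c y : psi (c *: y) = c ^+ 12 * psi y.
Proof.
rewrite /psi -exprMn; congr (_ ^+ _).
by rewrite mulr_sumr; apply: eq_bigr => j _; rewrite mxE.
Qed.

Lemma msz_diagX e n : msz (fun i => i) e ^+ n = msz (fun i => i) (fun i => n * e i)%N.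
Proof.
elim: n => [|n ih].
  by rewrite expr0 (_ : (1 : M3) = 1%:M) // -msz1; apply: msz_eq.
by rewrite exprS -mulmxE ih msz_mul //; apply: msz_eq; rewrite /chk /= !eqxx.
Qed.

Lemma mx3_mul a1 a2 a3 a4 a5 a6 a7 a8 a9 b1 b2 b3 b4 b5 b6 b7 b8 b9 :
  mx3 a1 a2 a3 a4 a5 a6 a7 a8 a9 *m mx3 b1 b2 b3 b4 b5 b6 b7 b8 b9 =
  mx3 (a1*b1 + a2*b4 + a3*b7) (a1*b2 + a2*b5 + a3*b8) (a1*b3 + a2*b6 + a3*b9)
      (a4*b1 + a5*b4 + a6*b7) (a4*b2 + a5*b5 + a6*b8) (a4*b3 + a5*b6 + a6*b9)
      (a7*b1 + a8*b4 + a9*b7) (a7*b2 + a8*b5 + a9*b8) (a7*b3 + a8*b6 + a9*b9).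
Proof.
apply/matrixP=> i j; rewrite !mxE !big_ord_recl big_ord0 addr0 !mxE /=.
by case: i => [[|[|[|?]]] ?] //; case: j => [[|[|[|?]]] ?] //=; rewrite addrA.
Qed.

Definition P : M3 := mx3 1 0 1 0 s2 0 (-1) 0 1.
Definition Pi : M3 := mx3 (1/2) 0 (-1/2) 0 (1/s2) 0 (1/2) 0 (1/2).

Lemma s2_sq : s2 ^+ 2 = 2.
Proof. exact: sqrtCK. Qed.
Lemma s2_neq0 : s2 != 0.
Proof. by apply/eqP=> h; have := s2_sq; rewrite h expr0n /= => /eqP; rewrite eq_sym pnatr_eq0. Qed.

Lemma mx3_1 : mx3 1 0 0 0 1 0 0 0 1 = 1%:M.
Proof.
apply/matrixP=> i j; rewrite !mxE /=.
by case: i => [[|[|[|?]]] ?] //; case: j => [[|[|[|?]]] ?].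
Qed.

Lemma PPi : P *m Pi = 1%:M.
Proof.
rewrite mx3_mul -mx3_1; have h := s2_neq0.
congr mx3; field; by rewrite ?expf_neq0.
Qed.

Definition Y1x := mx3 0 0 (z^+7) 0 (-z^+4) 0 (z^+7) 0 0.
Definition Y2x := mx3 (-z^+4) 0 0 0 0 (z^+7) 0 (z^+7) 0.
Definition YH1x : M3 := mx3 0 (-1) 0 (-1) 0 0 0 0 (-1).

Lemma s2_eq : s2 = 2 / s2.
Proof. by rewrite -[in RHS]s2_sq expr2 mulfK // s2_neq0. Qed.

Ltac fld := have hs := s2_neq0; have h2 : (2 : algC) != 0 by rewrite pnatr_eq0.
Lemma cG1 : G1 *m P = P *m Y1x.
Proof. rewrite /G1 /diag3 /P /Y1x !mx3_mul; fld; congr mx3; try (field; done); rewrite [in RHS]s2_eq; by field. Qed.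
Lemma cG2 : G2 *m P = P *m Y2x.
Proof. rewrite /G2 /P /Y2x !mx3_mul; fld; congr mx3; try (field; done); rewrite [in RHS]s2_eq; by field. Qed.
Lemma cH1 : H1 *m P = P *m YH1x.
Proof. rewrite /H1 /P /YH1x !mx3_mul; fld; congr mx3; try (field; done); rewrite [in RHS]s2_eq; by field. Qed.
Lemma cH3 : H3 *m P = P *m E.
Proof. rewrite /H3 /P /E !mx3_mul; fld; congr mx3; try (field; done); rewrite [in RHS]s2_eq; by field. Qed.

Definition dm (s : seq nat) := msz (fun i => i) (L s).
Definition pm (p s : seq nat) := msz (L p) (L s).

Definition F2m := dm [:: 2; 2; 14].
Definition C2m := dm [:: 6; 0; 12].
Definition Em := pm [:: 1; 2; 0] [:: 0; 0; 0].
Definition Btm := pm [:: 0; 2; 1] [:: 9; 9; 9].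
Definition Y1 := pm [:: 2; 1; 0] [:: 7; 13; 7].
Definition Y2 := pm [:: 0; 2; 1] [:: 13; 7; 7].
Definition YH1 := pm [:: 1; 0; 2] [:: 9; 9; 9].
Definition YAm := dm [:: 14; 14; 8].
Definition YBm := dm [:: 0; 12; 6].
Definition Wm := dm [:: 6; 6; 6].
Definition Fm := dm [:: 1; 1; 16].
Definition Fppm := dm [:: 16; 1; 1].

Lemma zneg a b : (a + 9 = b)%N -> - z ^+ a = z ^+ b.
Proof. by move<-; rewrite exprD z9 mulrN1. Qed.

Lemma zinv2 : (z ^+ 2)^-1 = z ^+ 16.
Proof.
apply: (mulfI (z_neq0 2)); rewrite mulfV ?z_neq0 // -exprD.
by rewrite z18.
Qed.

Ltac conv := apply/matrixP=> -[[|[|[|?]]] ?] -[[|[|[|?]]] ?]; rewrite !mxE //=.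
Ltac zfin := rewrite ?expr0 ?expr1 ?zinv2 //; try (by apply: zneg); try (by rewrite z9).

Lemma E_Em : E = Em. Proof. conv; zfin. Qed.
Lemma Bt_Btm : Bt = Btm. Proof. conv; zfin. Qed.
Lemma F_Fm : F = Fm. Proof. conv; zfin. Qed.
Lemma Fpp_Fppm : F'' = Fppm. Proof. conv; zfin. Qed.
Lemma Y1x_Y1 : Y1x = Y1. Proof. conv; zfin. Qed.
Lemma Y2x_Y2 : Y2x = Y2. Proof. conv; zfin. Qed.
Lemma YH1x_YH1 : YH1x = YH1. Proof. conv; zfin. Qed.
Lemma diag_t : diag3 1 (- z ^+ 3) (z ^+ 6) = dm [:: 0; 12; 6]. Proof. conv; zfin. Qed.

Lemma uP : P \in unitmx.
Proof. by have [] := mulmx1_unit PPi. Qed.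

Lemma cj_of X Y : X *m P = P *m Y -> cj P X = Y.
Proof. by move=> h; rewrite /cj -mulmxA h mulmxA mulVmx ?uP // mul1mx. Qed.

Lemma cjG1 : cj P G1 = Y1. Proof. by rewrite (cj_of cG1) Y1x_Y1. Qed.
Lemma cjG2 : cj P G2 = Y2. Proof. by rewrite (cj_of cG2) Y2x_Y2. Qed.
Lemma cjH1 : cj P H1 = YH1. Proof. by rewrite (cj_of cH1) YH1x_YH1. Qed.
Lemma cjH3 : cj P H3 = Em. Proof. by rewrite (cj_of cH3) E_Em. Qed.

Ltac mc := rewrite /F2m /C2m /Em /Btm /Y1 /Y2 /YH1 /YAm /YBm /Wm /Fm /Fppm /dm /pm;
  rewrite ?msz_diagX ?msz_mul //; try rewrite -msz1; apply: msz_eq; reflexivity.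

Lemma Y1inv : invmx Y1 = pm [:: 2; 1; 0] [:: 11; 5; 11].
Proof. apply: inv_eq; mc. Qed.
Lemma Y22inv : invmx (Y2 *m Y2) = dm [:: 10; 4; 4].
Proof. apply: inv_eq; mc. Qed.

Lemma cjA : cj P A = YAm.
Proof. rewrite /A !(cjM uP) (cjV uP) cjG1 cjG2 Y1inv; mc. Qed.
Lemma cjB : cj P B = YBm.
Proof. rewrite /B !(cjM uP) (cjV uP) !(cjM uP) cjG2 Y22inv cjG1; mc. Qed.

Lemma gin0 (a : M3) l : gen (a :: l) a.
Proof. by apply: gen_in; rewrite mem_head. Qed.
Lemma gin1 (a b : M3) l : gen (a :: b :: l) b.
Proof. by apply: gen_in; rewrite !inE eqxx ?orbT. Qed.
Lemma gin2 (a b c : M3) l : gen (a :: b :: c :: l) c.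
Proof. by apply: gen_in; rewrite !inE eqxx ?orbT. Qed.
Lemma gen_eq gs (x y : M3) : x = y -> gen gs y -> gen gs x.
Proof. by move->. Qed.

Ltac genw := match goal with
 | |- gen _ (_ *m _) => apply: gen_mul; genw
 | |- gen _ (_ ^+ _) => apply: gen_pow; genw
 | |- _ => first [exact: gin0 | exact: gin1 | exact: gin2]
 end.
Ltac gw w := apply: (@gen_eq _ _ w); [mc | genw].

Lemma FF : F *m F = F2m.
Proof. rewrite F_Fm; mc. Qed.
Lemma C2_C2m : C2 = C2m.
Proof.
have h : invmx F'' = dm [:: 2; 17; 17] by apply: inv_eq; rewrite Fpp_Fppm; mc.
rewrite /C2 h F_Fm; mc.
Qed.
Lemma third : F ^+ 12 *m C2 = diag3 1 (- z ^+ 3) (z ^+ 6).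
Proof. rewrite diag_t C2_C2m F_Fm; mc. Qed.

Definition D9' := gen [:: F2m; Em; Btm].
Definition ND' := gen [:: F2m; C2m].
Definition KD' := gen [:: Btm; Em].

Lemma D9E x : D9 x <-> D9' x.
Proof. by rewrite /D9 FF E_Em Bt_Btm. Qed.
Lemma NDE x : ND x <-> ND' x.
Proof. by rewrite /ND FF C2_C2m. Qed.
Lemma KDE x : KD x <-> KD' x.
Proof. by rewrite /KD E_Em Bt_Btm. Qed.

Lemma unit_of (X Y : M3) : X *m Y = 1%:M -> X \in unitmx.
Proof. by case/mulmx1_unit. Qed.

Lemma invF2 : invmx F2m = F2m ^+ 8. Proof. apply: inv_eq; mc. Qed.
Lemma invE : invmx Em = Em *m Em. Proof. apply: inv_eq; mc. Qed.
Lemma invBt : invmx Btm = Btm. Proof. apply: inv_eq; mc. Qed.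
Lemma invC2 : invmx C2m = C2m ^+ 2. Proof. apply: inv_eq; mc. Qed.
Lemma uF2 : F2m \in unitmx. Proof. apply: (@unit_of _ (F2m ^+ 8)); mc. Qed.
Lemma uE : Em \in unitmx. Proof. apply: (@unit_of _ (Em *m Em)); mc. Qed.
Lemma uBt : Btm \in unitmx. Proof. apply: (@unit_of _ Btm); mc. Qed.
Lemma uC2 : C2m \in unitmx. Proof. apply: (@unit_of _ (C2m ^+ 2)); mc. Qed.

Lemma ok3E p : ok3 p <-> forall i, (i < 3)%N -> (p i < 3)%N.
Proof.
split; first by move=> /allP h i hi; apply: h; rewrite mem_iota.
by move=> h; apply/allP=> i; rewrite mem_iota => /h.
Qed.

Definition NDinv (x : M3) := exists p e, [/\ x = msz p e,
  forall i, (i < 3)%N -> p i = i & forall i, (i < 3)%N -> ~~ odd (e i)].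
Definition KDinv (x : M3) := exists p e, [/\ x = msz p e,
  ok3 p & forall i, (i < 3)%N -> (9 %| e i)%N].
Definition Dinv (x : M3) := exists p e, [/\ x = msz p e,
  ok3 p & forall i, (i < 3)%N -> (e i %% 3 = e 0 %% 3)%N].

Lemma NDinv_mul x y : NDinv x -> NDinv y -> NDinv (x *m y).
Proof.
move=> [p1 [e1 [-> h1 o1]]] [p2 [e2 [-> h2 o2]]].
have ok1 : ok3 p1 by apply/ok3E=> i hi; rewrite h1.
exists (fun i => p2 (p1 i)), (fun i => e1 i + e2 (p1 i))%N; split.
- by rewrite msz_mul.
- by move=> i hi; rewrite h1 // h2.
- by move=> i hi; rewrite h1 // oddD negb_add (negbTE (o1 _ hi)) (negbTE (o2 _ hi)).
Qed.

Lemma KDinv_mul x y : KDinv x -> KDinv y -> KDinv (x *m y).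
Proof.
move=> [p1 [e1 [-> h1 o1]]] [p2 [e2 [-> h2 o2]]].
exists (fun i => p2 (p1 i)), (fun i => e1 i + e2 (p1 i))%N; split.
- by rewrite msz_mul.
- by apply/ok3E=> i hi; move/ok3E: h2; apply; move/ok3E: h1; apply.
- move=> i hi; rewrite dvdn_addr ?o1 //; apply: o2.
  by move/ok3E: h1; apply.
Qed.

Lemma Dinv_mul x y : Dinv x -> Dinv y -> Dinv (x *m y).
Proof.
move=> [p1 [e1 [-> h1 o1]]] [p2 [e2 [-> h2 o2]]].
exists (fun i => p2 (p1 i)), (fun i => e1 i + e2 (p1 i))%N; split.
- by rewrite msz_mul.
- by apply/ok3E=> i hi; move/ok3E: h2; apply; move/ok3E: h1; apply.
- move=> i hi; rewrite -modnDm o1 // o2; last by move/ok3E: h1; apply.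
  rewrite -(o2 (p1 0%N)); last by move/ok3E: h1; apply.
  by rewrite modnDm.
Qed.

Lemma NDinv_all x : ND' x -> NDinv x.
Proof.
move=> hx; have : mon [:: F2m; C2m] x.
  apply: gen_mon hx => g; rewrite !inE => /orP [] /eqP ->; split.
  - exact: uF2.
  - by rewrite invF2; apply: mon_pow; apply: mon_in; rewrite !inE eqxx.
  - exact: uC2.
  - by rewrite invC2; apply: mon_pow; apply: mon_in; rewrite !inE eqxx ?orbT.
apply: mon_ind'.
- by exists (fun i => i), (fun _ => 0%N); rewrite msz1.
- move=> g; rewrite !inE => /orP [] /eqP ->.
  + by exists (fun i => i), (L [:: 2; 2; 14]); split=> // -[|[|[|i]]].
  + by exists (fun i => i), (L [:: 6; 0; 12]); split=> // -[|[|[|i]]].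
- exact: NDinv_mul.
Qed.

Lemma KDinv_all x : KD' x -> KDinv x.
Proof.
move=> hx; have : mon [:: Btm; Em] x.
  apply: gen_mon hx => g; rewrite !inE => /orP [] /eqP ->; split.
  - exact: uBt.
  - by rewrite invBt; apply: mon_in; rewrite !inE eqxx.
  - exact: uE.
  - by rewrite invE; apply: mon_mul; apply: mon_in; rewrite !inE eqxx ?orbT.
apply: mon_ind'.
- by exists (fun i => i), (fun _ => 0%N); rewrite msz1.
- move=> g; rewrite !inE => /orP [] /eqP ->.
  + by exists (L [:: 0; 2; 1]), (L [:: 9; 9; 9]); split=> // -[|[|[|i]]].
  + by exists (L [:: 1; 2; 0]), (L [:: 0; 0; 0]); split=> // -[|[|[|i]]].
- exact: KDinv_mul.
Qed.

Lemma Dinv_all x : D9' x -> Dinv x.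
Proof.
move=> hx; have : mon [:: F2m; Em; Btm] x.
  apply: gen_mon hx => g; rewrite !inE => /or3P [] /eqP ->; split.
  - exact: uF2.
  - by rewrite invF2; apply: mon_pow; apply: mon_in; rewrite !inE eqxx.
  - exact: uE.
  - by rewrite invE; apply: mon_mul; apply: mon_in; rewrite !inE eqxx ?orbT.
  - exact: uBt.
  - by rewrite invBt; apply: mon_in; rewrite !inE eqxx ?orbT.
apply: mon_ind'.
- by exists (fun i => i), (fun _ => 0%N); rewrite msz1.
- move=> g; rewrite !inE => /or3P [] /eqP ->.
  + by exists (fun i => i), (L [:: 2; 2; 14]); split=> // -[|[|[|i]]].
  + by exists (L [:: 1; 2; 0]), (L [:: 0; 0; 0]); split=> // -[|[|[|i]]].
  + by exists (L [:: 0; 2; 1]), (L [:: 9; 9; 9]); split=> // -[|[|[|i]]].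
- exact: Dinv_mul.
Qed.

Lemma zdvd m : (18 %| m)%N -> z ^+ m = 1.
Proof. by move=> h; rewrite zmod (eqP h) expr0. Qed.

Lemma ND_KD_1 x : NDinv x -> KDinv x -> x = 1%:M.
Proof.
move=> [p [e [-> hp he]]] [p' [e' [e1 h' he']]].
have key : forall i, (i < 3)%N -> z ^+ e i = 1.
  move=> i hi; have hpi : (p' i < 3)%N by move/ok3E: h'; apply.
  have := congr1 (fun M : M3 => M (Ordinal hi) (Ordinal hpi)) e1.
  rewrite /= !mxE /= eqxx hp //.
  case: eqP => [ei|_] hz; last by move: (z_neq0 (e' i)); rewrite -hz eqxx.
  have y9 : z ^+ e i ^+ 9 = 1.
    by rewrite -exprM zdvd // (dvdn_mul (_ : 2 %| e i)%N (dvdnn 9)) // dvdn2 he.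
  have y2 : z ^+ e i ^+ 2 = 1.
    by rewrite hz -exprM zdvd // (dvdn_mul (he' _ hi) (dvdnn 2)).
  by rewrite -y9 (_ : 9 = 1 + 2 * 4)%N // exprD exprM y2 expr1n mulr1 expr1.
apply/matrixP=> i j; rewrite !mxE hp //.
case: eqP => [/val_inj ->|ne]; first by rewrite key // eqxx.
by case: eqP => // h; case: ne; rewrite h.
Qed.

Lemma sdD9' : semidirect D9' ND' KD'.
Proof.
apply: semidirect_gen.
- by move=> g; rewrite !inE => /or3P [] /eqP ->; [exact: uF2|exact: uE|exact: uBt].
- move=> n; rewrite !inE => /orP [] /eqP ->; first by genw.
  gw (F2m *m F2m *m Btm *m F2m *m Btm).
- by move=> k; rewrite !inE => /orP [] /eqP ->; genw.
- move=> g n; rewrite !inE => /or3P [] /eqP -> /orP [] /eqP ->;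
    rewrite ?invF2 ?invE ?invBt; split.
  + gw F2m.
  + gw F2m.
  + gw C2m.
  + gw C2m.
  + gw (F2m *m C2m *m C2m).
  + gw (F2m ^+ 7 *m C2m).
  + gw (F2m ^+ 3 *m C2m).
  + gw (F2m ^+ 6 *m C2m).
  + gw (F2m ^+ 7 *m C2m).
  + gw (F2m ^+ 7 *m C2m).
  + gw (F2m ^+ 6 *m C2m ^+ 2).
  + gw (F2m ^+ 6 *m C2m ^+ 2).
- move=> g; rewrite !inE => /or3P [] /eqP ->.
  + exists F2m, 1%:M; split; [genw | exact: gen_one | by rewrite mulmx1].
  + exists 1%:M, Em; split; [exact: gen_one | genw | by rewrite mul1mx].
  + exists 1%:M, Btm; split; [exact: gen_one | genw | by rewrite mul1mx].
- move=> x hn hk; apply: ND_KD_1; [exact: NDinv_all | exact: KDinv_all].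
Qed.

Definition Qg := gen [:: Y1; Y2].
Definition cNg := gen [:: YAm; YBm].
Definition cKg := gen [:: YH1; Em].

Lemma QgE x : D9' x <-> Qg x.
Proof.
split; apply: gen_sub => g; rewrite !inE.
- case/or3P=> /eqP ->.
  + gw (Y1 *m Y1 *m Y1 *m Y1 *m Y1 *m Y2 *m Y2 *m Y1).
  + gw (Y1 *m Y1 *m Y1 *m Y1 *m Y1 *m Y1 *m Y1 *m Y2 *m Y1 *m Y1 *m Y1 *m Y1).
  + gw (Y1 *m Y1 *m Y1 *m Y1 *m Y1 *m Y1 *m Y2 *m Y2 *m Y2).
- case/orP=> /eqP ->.
  + gw (F2m *m Em *m Btm *m F2m).
  + gw (F2m *m Btm *m F2m).
Qed.

Lemma cNgE x : ND' x <-> cNg x.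
Proof.
split; apply: gen_sub => g; rewrite !inE.
- case/orP=> /eqP ->.
  + gw (YAm ^+ 4).
  + gw (YAm ^+ 3 *m YBm).
- case/orP=> /eqP ->.
  + gw (F2m ^+ 7).
  + gw (F2m ^+ 6 *m C2m).
Qed.

Lemma cKgE x : KD' x <-> cKg x.
Proof.
split; apply: gen_sub => g; rewrite !inE.
- case/orP=> /eqP ->.
  + gw (YH1 *m Em *m Em).
  + genw.
- case/orP=> /eqP ->.
  + gw (Btm *m Em).
  + genw.
Qed.

Lemma gen_cj gs hs : map (cj P) gs = hs -> forall x, gen gs x <-> gen hs (cj P x).
Proof.
move=> hm x; have uP' : invmx P \in unitmx by rewrite unitmx_inv uP.
split.
  apply: (gen_hom (cj1 uP) (cjM uP) (cjV uP)) => g hg.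
  by apply: gen_in; rewrite -hm map_f.
move=> h; rewrite -(cjK uP x).
apply: (gen_hom (cj1 uP') (cjM uP') (cjV uP') _ h) => y.
rewrite -hm => /mapP [g hg ->]; rewrite cjK ?uP //; exact: gen_in.
Qed.

Lemma FrE x : Fr162 x <-> Qg (cj P x).
Proof. by apply: gen_cj; rewrite /= cjG1 cjG2. Qed.
Lemma NNE x : NN x <-> cNg (cj P x).
Proof. by apply: gen_cj; rewrite /= cjA cjB. Qed.
Lemma KHE x : KH x <-> cKg (cj P x).
Proof. by apply: gen_cj; rewrite /= cjH1 cjH3. Qed.

Lemma sd1 : semidirect Fr162 NN KH.
Proof.
apply: (semidirect_cj uP FrE NNE KHE).
exact: (semidirect_ext QgE cNgE cKgE sdD9').
Qed.

Lemma sd2 : semidirect D9 ND KD.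
Proof.
apply: (semidirect_ext _ _ _ sdD9') => x; apply: iff_sym;
  [exact: D9E | exact: NDE | exact: KDE].
Qed.

From mathcomp Require Import zify.

Lemma msz_ext p e p' e' : (forall i, (i < 3)%N -> p i = p' i) ->
  (forall i, (i < 3)%N -> z ^+ e i = z ^+ e' i) -> msz p e = msz p' e'.
Proof.
move=> hp he; apply/matrixP=> i j; rewrite !mxE hp ?ltn_ord //.
by rewrite he ?ltn_ord.
Qed.

Lemma inWm : D9' Wm.
Proof. gw (F2m ^+ 3). Qed.

Lemma Wscale n p e : Wm ^+ n *m msz p e = z ^+ (6 * n) *: msz p e.
Proof.
rewrite /Wm /dm msz_diagX msz_mul // msz_scale; apply: msz_ext => // -[|[|[|i]]] //= _;
  by rewrite mulnC.
Qed.

Lemma scaleD9 y n : D9' y -> Dinv y -> D9' (z ^+ (6 * n) *: y).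
Proof.
move=> hy [p [e [ye _ _]]]; rewrite ye -Wscale -ye.
apply: gen_mul => //; apply: gen_pow; exact: inWm.
Qed.

Lemma z12 a b : (a %% 3 = b %% 3)%N -> z ^+ (12 * a) = z ^+ (12 * b).
Proof.
move=> h; apply: zeq; lia.
Qed.

Lemma psi_mul x y : Dinv x -> Dinv y -> psi (x *m y) = psi x * psi y.
Proof.
move=> [p1 [e1 [-> h1 o1]]] [p2 [e2 [-> h2 o2]]].
have q0 : (p1 0 < 3)%N by move/ok3E: h1; apply.
rewrite msz_mul // !psi_msz //; last by move/ok3E: h2; apply.
  by rewrite mulnDr exprD (z12 (o2 _ q0)).
by move/ok3E: h2; apply.
Qed.

Lemma Dinv_psi y : Dinv y -> exists e0, psi y = z ^+ (12 * e0).
Proof.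
move=> [p [e [-> h _]]]; exists (e 0%N); rewrite psi_msz //.
by move/ok3E: h; apply.
Qed.

Lemma psi_id y : Dinv y -> psi (psi y *: y) = psi y.
Proof.
move=> hy; have [e0 he] := Dinv_psi hy.
rewrite psi_scale {1}he -exprM zdvd ?mul1r //.
by apply/dvdnP; exists (8 * e0)%N; lia.
Qed.

Definition f (x : M3) := psi (cj P x) *: cj P x.

Lemma Fr_Dinv x : Fr162 x -> Dinv (cj P x).
Proof. by move=> /FrE /QgE /Dinv_all. Qed.

Lemma iso : group_iso Fr162 D9 f.
Proof.
split.
- move=> x hx; apply/D9E; have hd := Fr_Dinv hx; rewrite /f.
  have [e0 ->] := Dinv_psi hd.
  rewrite (_ : 12 * e0 = 6 * (2 * e0))%N; last by lia.
  by apply: scaleD9; [apply/QgE/FrE | exact: hd].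
- move=> x y hx hy; rewrite /f (cjM uP) (psi_mul (Fr_Dinv hx) (Fr_Dinv hy)).
  by rewrite -scalemxAl -scalemxAr scalerA.
- move=> x y hx hy; rewrite /f => e.
  have e' : psi (cj P x) = psi (cj P y).
    by rewrite -(psi_id (Fr_Dinv hx)) e (psi_id (Fr_Dinv hy)).
  move: e; rewrite e'; case/Dinv_psi: (Fr_Dinv hy) => e0 ->.
  by move/(scalerI (z_neq0 _))/(cj_inj uP).
- move=> y /D9E hy; have [p [e [ye hp ho]]] := Dinv_all hy.
  set y' := z ^+ (6 * (4 * e 0%N)) *: y.
  have hy' : D9' y' by apply: scaleD9 => //; exists p, e.
  exists (cj (invmx P) y').
    by apply/FrE; rewrite cjKV ?uP //; apply/QgE.
  have q0 : (p 0 < 3)%N by move/ok3E: hp; apply.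
  rewrite /f cjKV ?uP // /y' ye msz_scale psi_msz // msz_scale.
  apply: msz_ext => // i hi; apply: zeq.
  lia.
Qed.

Theorem theorem6 :
  [/\ semidirect Fr162 NN KH,
      semidirect D9 ND KD,
      F ^+ 12 *m C2 = diag3 1 (- z ^+ 3) (z ^+ 6)
    & exists f : M3 -> M3,
        [/\ group_iso Fr162 D9 f,
            f A = F *m F,
            f B = F ^+ 12 *m C2,
            f H1 = Bt *m E
          & f H3 = E]].
Proof.
split; [exact: sd1 | exact: sd2 | exact: third |].
exists f; split; first exact: iso.
- rewrite /f cjA FF /YAm /F2m /dm psi_msz // msz_scale; apply: msz_eq; reflexivity.
- rewrite /f cjB third diag_t /YBm /dm psi_msz // msz_scale; apply: msz_eq; reflexivity.
- rewrite /f cjH1 Bt_Btm E_Em /YH1 /pm psi_msz // msz_scale; mc.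
- rewrite /f cjH3 E_Em /Em /pm psi_msz // msz_scale; apply: msz_eq; reflexivity.
Qed.
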